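(* Let $X$ be a real Banach space and $T:X\rightrightarrows X^*$ a maximal monotone operator. Then $$D(\mathcal{J}\delta_T)\subseteq\{(x,x^* )\in X\times X^*\;|\;\langle x,x^*\rangle\leq 0\},$$ i.e., every $(x,x^* )\in X\times X^*$ with $\sup_{(y,y^* )\in T}\big(\langle y,x^*\rangle+\langle x,y^*\rangle\big)<\infty$ satisfies $\langle x,x^*\rangle\leq0$.
   Context: $X$ is identified with its image in $X^{**}$. An operator $T:X\rightrightarrows X^*$ is a subset of $X\times X^*$; it is monotone if $\langle x-y,x^*-y^*\rangle\geq0$ for all $(x,x^* ),(y,y^* )\in T$, and maximal monotone if it is monotone and not properly contained in another monotone operator. $\delta_T$ is the indicator function of $T$ (0 on $T$, $+\infty$ elsewhere). For $h:X\times X^*\to\mathbb{R}\cup\{\pm\infty\}$, $h^*(x^*,x^{**})=\sup_{(y,y^* )}\langle y,x^*\rangle+\langle x^{**},y^*\rangle-h(y,y^* )$ on $X^*\times X^{**}$, and $(\mathcal{J}h)(x,x^* )=h^*(x^*,x)$; $D(f)=\{z\;|\;f(z)<\infty\}$. *)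

(* Defs.v *)
From HB Require Import structures.
From mathcomp Require Import all_boot all_order all_algebra.
From mathcomp Require Import all_classical all_reals all_analysis.
Set Implicit Arguments. Unset Strict Implicit. Unset Printing Implicit Defensive.
Import Order.TTheory GRing.Theory Num.Theory.
Import numFieldNormedType.Exports.
Local Open Scope classical_set_scope.
Local Open Scope ring_scope.

Record dual (R : realType) (X : normedModType R) := Dual {
  dual_fun :> X -> R;
  dual_linear : linear dual_fun;
  dual_cont : continuous dual_fun }.

Definition pairing (R : realType) (X : normedModType R) (x : X) (xs : dual X) : R :=
  dual_fun xs x.

Definition monotone_op (R : realType) (X : normedModType R) (T : set (X * dual X)) :=
  forall p q, T p -> T q ->
    0 <= pairing (p.1 - q.1) p.2 - pairing (p.1 - q.1) q.2.

Definition maximal_monotone (R : realType) (X : normedModType R) (T : set (X * dual X)) :=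
  monotone_op T /\
  forall S : set (X * dual X), monotone_op S -> T `<=` S -> S = T.

Definition in_dom_J_delta (R : realType) (X : normedModType R) (T : set (X * dual X))
  (x : X) (xs : dual X) :=
  exists M : R, forall q, T q -> pairing q.1 xs + pairing x q.2 <= M.

(* Main.v *)
Require Import Defs.
From mathcomp Require Import all_boot all_order all_algebra.
From mathcomp Require Import all_classical all_reals all_analysis.
From mathcomp Require Import ring lra.
Import numFieldNormedType.Exports.
Import Order.TTheory GRing.Theory Num.Theory.
Local Open Scope classical_set_scope.
Local Open Scope ring_scope.

Section Helpers.
Variables (R : realType) (X : normedModType R).

Lemma dual0 (f : dual X) : f 0 = 0.
Proof.
have h := dual_linear f 1 0 0.
rewrite scaler0 add0r scale1r in h.
by apply/eqP; rewrite -(subrr (f 0)) {2}h addrK.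
Qed.

Lemma dualD (f : dual X) u v : f (u + v) = f u + f v.
Proof. by have := dual_linear f 1 u v; rewrite !scale1r. Qed.

Lemma dualZ (f : dual X) (c : R) u : f (c *: u) = c * f u.
Proof. by have := dual_linear f c u 0; rewrite !addr0 dual0 addr0. Qed.

Lemma dualB (f : dual X) u v : f (u - v) = f u - f v.
Proof.
by rewrite dualD -scaleN1r dualZ mulN1r.
Qed.

Lemma dualN (f : dual X) u : f (- u) = - f u.
Proof. by rewrite -scaleN1r dualZ mulN1r. Qed.

Definition comb (a xs : dual X) (t : R) (z : X) : R := a z + t * xs z.

Lemma comb_linear a xs t : linear (comb a xs t).
Proof.
move=> c u v; rewrite /comb !dualD !dualZ /=.
rewrite /GRing.scale /=. ring.
Qed.

Lemma comb_cont a xs t : continuous (comb a xs t).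
Proof.
move=> z.
have h1 : {for z, continuous (fun _ : X => t)} by exact: cst_continuous.
have := continuousD (@dual_cont _ _ a z) (continuousM h1 (@dual_cont _ _ xs z)).
by [].
Qed.

Definition combD a xs t : dual X := Dual (comb_linear a xs t) (comb_cont a xs t).

End Helpers.

Theorem theorem4p6 (R : realType) (X : completeNormedModType R)
  (T : set (X * dual X)) :
  maximal_monotone T ->
  forall (x : X) (xs : dual X), in_dom_J_delta T x xs -> pairing x xs <= 0.
Proof.
move=> [mono maxi] x xs [M HM].
rewrite leNgt; apply/negP => hp.
have [[a as_] Ta] : exists q, T q.
  apply: contrapT => hne.
  have hS : monotone_op [set ((0 : X), xs)].
    by move=> p q -> ->; rewrite subrr.
  have hTS : T `<=` [set ((0 : X), xs)].
    by move=> q Tq; exfalso; apply: hne; exists q.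
  have E := maxi _ hS hTS.
  by apply: hne; exists (0, xs); rewrite -E.
set p := pairing x xs.
set C := M - xs a - as_ x.
set t := (`|C| + 1) / p.
have tp : t * p = `|C| + 1 by rewrite /t mulfVK // gt_eqF.
have tpos : 0 < t by rewrite /t divr_gt0 // ltr_pwDr // normr_ge0.
set p0 := (a + t *: x, @combD _ _ as_ xs t).
have HMa := HM _ Ta.
case: (pselect (forall q, T q ->
   0 <= pairing (q.1 - p0.1) q.2 - pairing (q.1 - p0.1) p0.2)) => [hall|hex].
- pose S := T `|` [set p0].
  have hS : monotone_op S.
    move=> q1 q2 [T1|->] [T2|->].
    + exact: mono.
    + exact: hall.
    + have := hall _ T2.
      rewrite /pairing /= !(dualB, dualN, dualD, dualZ) /comb /= !(dualB, dualN, dualD, dualZ).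
      move: (q2.2 q2.1) (q2.2 a) (q2.2 x) (as_ q2.1) (as_ a) (as_ x)
            (xs q2.1) (xs a) (xs x) => ? ? ? ? ? ? ? ? ? h; apply: (le_trans h); rewrite le_eqVlt -subr_eq0; apply/orP; left; apply/eqP; ring.
    + by rewrite [X in 0 <= X]subrr.
  have hTS : T `<=` S by move=> q Tq; left.
  have ST := maxi _ hS hTS.
  have Tp0 : T p0 by rewrite -ST; right.
  have := HM _ Tp0.
  rewrite /pairing /= !dualD !dualZ /comb /=.
  rewrite -/(pairing x xs) -/p.
  have hC : C <= `|C| by exact: ler_norm.
  have hn := normr_ge0 C.
  move: hC hn tp; rewrite /C.
  move: (`|M - xs a - as_ x|) (t * p) (xs a) (as_ x) => nC u b c; lra.
- have [[y ys] Tq] : exists q, T q /\ ~ (0 <= pairing (q.1 - p0.1) q.2 - pairing (q.1 - p0.1) p0.2).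
    apply: contrapT => hne; apply: hex => q Tq.
    by apply: contrapT => hn; apply: hne; exists q.
  case: Tq => Tq hneg.
  have hm := mono _ _ Tq Ta.
  have hMy := HM _ Tq.
  move: hneg hm hMy.
  rewrite /pairing /= !(dualB, dualN, dualD, dualZ) /comb /= !(dualB, dualN, dualD, dualZ).
  rewrite -/(pairing x xs) -/p.
  have hC : C <= `|C| by exact: ler_norm.
  move: hC tp tpos; rewrite /C /pairing.
  move: (ys y) (ys a) (ys x) (as_ y) (as_ a) (as_ x) (xs y) (xs a) (dual_fun xs x) => *.
  nra.
Qed.
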